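(* Let $\mathbf{x}=x_1x_2\ldots$ be an infinite word and $n\ge1$ an integer with $r(n+1,\mathbf{x})=r(n,\mathbf{x})+1$. Let $j$ be the integer with $1\le j<r(n,\mathbf{x})-n+1$ and $x_j^{j+n-1}=x_{r(n,\mathbf{x})-n+1}^{r(n,\mathbf{x})}$. Then $x_{j+n}=x_{r(n,\mathbf{x})+1}$.
   Context: $x_i^j=x_i\cdots x_j$; $r(n,\mathbf{x})=\min\{m\ge1:\ x_i^{i+n-1}=x_{m-n+1}^{m}\text{ for some } 1\le i\le m-n\}$ (such a $j$ exists and is unique). *)

(* Defs.v *)
From mathcomp Require Import all_boot.
Set Implicit Arguments. Unset Strict Implicit. Unset Printing Implicit Defensive.

(* An infinite word x = x_1 x_2 ... over an alphabet A is a function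
   x : nat -> A; only the values at indices >= 1 are used (x 0 is ignored). *)

Definition factor_eq (A : Type) (x : nat -> A) (i k n : nat) : Prop :=
  forall t, t < n -> x (i + t) = x (k + t).

Definition r_cond (A : Type) (n : nat) (x : nat -> A) (m : nat) : Prop :=
  exists i, [/\ 1 <= i, i <= m - n & factor_eq x i (m - n + 1) n].

Definition is_r (A : Type) (n : nat) (x : nat -> A) (m : nat) : Prop :=
  [/\ 1 <= m, r_cond n x m & forall m', 1 <= m' -> r_cond n x m' -> m <= m'].

(* Main.v *)
Require Import Defs.
From mathcomp Require Import all_boot.
From mathcomp Require Import zify.

Lemma uniq_aux (A : Type) (x : nat -> A) (n rn i j : nat) (hn : 1 <= n)
  (Hmin : forall m', 1 <= m' -> r_cond n x m' -> rn <= m')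
  (hi : 1 <= i) (hij : i < j) (hj : j <= rn - n)
  (fi : factor_eq x i (rn - n + 1) n) (fj : factor_eq x j (rn - n + 1) n) : False.
Proof.
have : rn <= j + n - 1.
  apply: Hmin; first lia.
  exists i; split => //; first lia.
  have -> : j + n - 1 - n + 1 = j by lia.
  move=> t ht; rewrite (fi t ht) (fj t ht) //.
lia.
Qed.

Theorem lemma5p5 (A : Type) (x : nat -> A) (n : nat) (hn : 1 <= n)
  (rn : nat) (Hrn : is_r n x rn) (Hrn1 : is_r n.+1 x rn.+1)
  (j : nat) (hj1 : 1 <= j) (hj2 : j < rn - n + 1)
  (hfac : factor_eq x j (rn - n + 1) n) :
  x (j + n) = x (rn + 1).
Proof.
case: Hrn => _ _ Hmin.
case: Hrn1 => _ [i [hi1 hi2 hfi]] _.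
rewrite subSS in hi2 hfi.
have hrn : n < rn by lia.
have fi : factor_eq x i (rn - n + 1) n.
  by move=> t ht; apply: hfi; lia.
have [hlt|hgt|heq] := ltngtP i j.
- exfalso; refine (@uniq_aux A x n rn _ _ hn Hmin hi1 hlt _ fi hfac); lia.
- exfalso; refine (@uniq_aux A x n rn _ _ hn Hmin hj1 hgt _ hfac fi); lia.
- subst i. rewrite (hfi n (ltnSn n)). congr x. lia.
Qed.
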